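(* Let $X,Y$ be compact metric spaces, $d$ the metric on $X$, and let $\phi:\mathrm{M}_m(\mathrm{C}(X))\to\mathrm{M}_{nm}(\mathrm{C}(Y))$ be a diagonal $*$-homomorphism with eigenvalue maps $\lambda_1,\dots,\lambda_n:Y\to X$, i.e. $\phi(f)=\mathrm{diag}(f\circ\lambda_1,\dots,f\circ\lambda_n)$ with each $f\circ\lambda_s$ an $m\times m$ block. Let $\epsilon>0$, $f\in\mathrm{M}_m(\mathrm{C}(X))$, and choose $\eta>0$ such that $\|f(x)-f(y)\|<\epsilon$ whenever $d(x,y)<2\eta$. Let $U$ be the open ball of radius $\eta$ centred at $x_0\in X$ and suppose that $Y=\lambda_1^{-1}(U)\cup\cdots\cup\lambda_n^{-1}(U)$. Then there exist a unitary $u\in\mathrm{M}_{nm}(\mathrm{C}(Y))$ and an element $b\in\mathrm{M}_{nm-m}(\mathrm{C}(Y))$ such that \[ \Big\|u\,\phi(f)\,u^*-\begin{pmatrix} f(x_0)&0\\0&b\end{pmatrix}\Big\|<\epsilon, \] where $f(x_0)\in\mathrm{M}_m$ is regarded as a constant function. *)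

(* Defs.v *)
From HB Require Import structures.
From mathcomp Require Import all_boot all_order all_algebra.
From mathcomp Require Import all_classical all_reals all_analysis.
From mathcomp Require Import complex.

Set Implicit Arguments.
Unset Strict Implicit.
Unset Printing Implicit Defensive.

Import Order.TTheory GRing.Theory Num.Theory.
Import numFieldTopology.Exports.
Local Open Scope classical_set_scope.
Local Open Scope ring_scope.

Section Defs.
Variable R : realType.

Definition cabs2 (z : R[i]) : R := complex.Re z ^+ 2 + complex.Im z ^+ 2.

Definition vnorm k (v : 'cV[R[i]]_k) : R := Num.sqrt (\sum_(i < k) cabs2 (v i ord0)).

Definition opnorm k l (A : 'M[R[i]]_(k, l)) : R :=
  sup [set vnorm (A *m v) | v in [set v : 'cV[R[i]]_l | vnorm v <= 1]].

Definition adjmx k l (A : 'M[R[i]]_(k, l)) : 'M[R[i]]_(l, k) := map_mx (@conjc R) A^T.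

Definition unitary_mx k (A : 'M[R[i]]_k) : Prop :=
  A *m adjmx A = 1%:M /\ adjmx A *m A = 1%:M.

(* an element of M_(k,l)(C(T)): a matrix-valued function that is continuous
   (entrywise, real and imaginary parts) *)
Definition mx_continuous (T : topologicalType) k l (F : T -> 'M[R[i]]_(k, l)) : Prop :=
  forall i j, continuous (fun t => complex.Re (F t i j)) /\ continuous (fun t => complex.Im (F t i j)).

Definition supnorm (Y : Type) k l (F : Y -> 'M[R[i]]_(k, l)) : R :=
  sup [set opnorm (F y) | y in [set: Y]].
End Defs.

Lemma blk_proof n m (i : 'I_(n * m)) : (i %/ m < n)%N.
Proof.
case: i => i /=; case: m => [|m]; first by rewrite muln0.
by rewrite ltn_divLR.
Qed.

Lemma pos_proof n m (i : 'I_(n * m)) : (i %% m < m)%N.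
Proof.
case: i => i /=; case: m => [|m]; first by rewrite muln0.
by rewrite ltn_mod.
Qed.

Definition blk_of n m (i : 'I_(n * m)) : 'I_n := Ordinal (blk_proof i).
Definition pos_of n m (i : 'I_(n * m)) : 'I_m := Ordinal (pos_proof i).

(* the diagonal *-homomorphism phi(f) = diag(f o lam_1, ..., f o lam_n) *)
Definition diag_hom (R : realType) (X Y : Type) n m (lam : 'I_n -> Y -> X)
  (f : X -> 'M[R[i]]_m) : Y -> 'M[R[i]]_(n * m) :=
  fun y => \matrix_(i, j) (if blk_of i == blk_of j
                           then f (lam (blk_of i) y) (pos_of i) (pos_of j)
                           else 0).

Lemma diag2_proof n m : (0 < n)%N -> (m + (n * m - m) = n * m)%N.
Proof. by case: n => // n _; rewrite mulSn addKn. Qed.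

Definition diag2 (R : realType) n m (hn : (0 < n)%N) (A : 'M[R[i]]_m)
  (B : 'M[R[i]]_(n * m - m)) : 'M[R[i]]_(n * m) :=
  castmx (diag2_proof m hn, diag2_proof m hn) (block_mx A 0 0 B).

(* Main.v *)
Require Import Defs.
From HB Require Import structures.
From mathcomp Require Import all_boot all_order all_algebra.
From mathcomp Require Import all_classical all_reals all_analysis.
From mathcomp Require Import complex.
From mathcomp Require Import ring lra.

Set Implicit Arguments.
Unset Strict Implicit.
Unset Printing Implicit Defensive.
Import Order.TTheory GRing.Theory Num.Theory.
Import numFieldTopology.Exports.
Local Open Scope classical_set_scope.
Local Open Scope ring_scope.
Local Open Scope complex_scope.
Section Norms.
Variable R : realType.
Implicit Types a b z : R[i].

Lemma ReM a b : complex.Re (a * b) = complex.Re a * complex.Re b - complex.Im a * complex.Im b.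
Proof. by case: a => ? ?; case: b => ? ?. Qed.
Lemma ImM a b : complex.Im (a * b) = complex.Re a * complex.Im b + complex.Im a * complex.Re b.
Proof. by case: a => ? ?; case: b => ? ?. Qed.
Lemma ReD a b : complex.Re (a + b) = complex.Re a + complex.Re b.
Proof. by case: a => ? ?; case: b => ? ?. Qed.
Lemma ImD a b : complex.Im (a + b) = complex.Im a + complex.Im b.
Proof. by case: a => ? ?; case: b => ? ?. Qed.
Lemma ReN a : complex.Re (- a) = - complex.Re a.
Proof. by case: a. Qed.
Lemma ImN a : complex.Im (- a) = - complex.Im a.
Proof. by case: a. Qed.
Lemma Re0 : complex.Re (0 : R[i]) = 0. Proof. by []. Qed.
Lemma Im0 : complex.Im (0 : R[i]) = 0. Proof. by []. Qed.
Lemma Re_sum I (r : seq I) (P : pred I) (F : I -> R[i]) :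
  complex.Re (\sum_(i <- r | P i) F i) = \sum_(i <- r | P i) complex.Re (F i).
Proof. exact: (big_morph _ ReD Re0). Qed.
Lemma Im_sum I (r : seq I) (P : pred I) (F : I -> R[i]) :
  complex.Im (\sum_(i <- r | P i) F i) = \sum_(i <- r | P i) complex.Im (F i).
Proof. exact: (big_morph _ ImD Im0). Qed.
Lemma Re_real (r : R) : complex.Re (r%:C) = r. Proof. by []. Qed.
Lemma Im_real (r : R) : complex.Im (r%:C) = 0. Proof. by []. Qed.
Lemma Re_nat k : complex.Re (k%:R : R[i]) = k%:R.
Proof. by elim: k => // k IH; rewrite !mulrS ReD IH. Qed.
Lemma Im_nat k : complex.Im (k%:R : R[i]) = 0.
Proof. by elim: k => // k IH; rewrite !mulrS ImD IH addr0. Qed.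

Lemma cabs2_ge0 z : 0 <= cabs2 z.
Proof. by rewrite /cabs2 addr_ge0 // sqr_ge0. Qed.

Lemma cabs2M a b : cabs2 (a * b) = cabs2 a * cabs2 b.
Proof. rewrite /cabs2 ReM ImM; ring. Qed.

Lemma cabs2D_le a b (d : R) : 0 < d ->
  cabs2 (a + b) <= (1 + d) * cabs2 a + (1 + d^-1) * cabs2 b.
Proof.
move=> d0; rewrite /cabs2 ReD ImD.
set x1 := complex.Re a; set x2 := complex.Im a; set y1 := complex.Re b; set y2 := complex.Im b.
have e : (1 + d) * (x1 ^+ 2 + x2 ^+ 2) + (1 + d^-1) * (y1 ^+ 2 + y2 ^+ 2)
   - ((x1 + y1) ^+ 2 + (x2 + y2) ^+ 2) = d^-1 * ((d * x1 - y1) ^+ 2 + (d * x2 - y2) ^+ 2).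
  by field; rewrite gt_eqF.
rewrite -subr_ge0 e; apply: mulr_ge0; first by rewrite invr_ge0 ltW.
by rewrite addr_ge0 // sqr_ge0.
Qed.

Lemma cabs2_eq0 z : cabs2 z = 0 -> z = 0.
Proof.
case: z => x y; rewrite /cabs2 /= => h.
have hx : x ^+ 2 = 0 by apply/eqP; rewrite eq_le sqr_ge0 andbT -h lerDl sqr_ge0.
have hy : y ^+ 2 = 0 by move: h; rewrite hx add0r.
by move/eqP: hx; rewrite sqrf_eq0 => /eqP ->; move/eqP: hy; rewrite sqrf_eq0 => /eqP ->.
Qed.

Lemma cabs2_real (r : R) : cabs2 (r%:C) = r ^+ 2.
Proof. by rewrite /cabs2 /= expr0n /= addr0. Qed.

Lemma cabs2_sum_le k (F : 'I_k -> R[i]) :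
  cabs2 (\sum_(j < k) F j) <= (2 ^ k)%:R * \sum_(j < k) cabs2 (F j).
Proof.
elim: k F => [|k IH] F; first by rewrite !big_ord0 /cabs2 /= expr0n /= addr0 mulr0.
rewrite !big_ord_recr /=.
set s := \sum_(i < k) F _; set t := \sum_(i < k) cabs2 _.
have h3 := cabs2D_le s (F ord_max) (ltr01 : (0:R) < 1); rewrite invr1 in h3.
have h1 : cabs2 s <= (2 ^ k)%:R * t := IH _.
have hF := cabs2_ge0 (F ord_max).
have hs : 0 <= t by apply: sumr_ge0 => j _; apply: cabs2_ge0.
have h2 : (1 <= (2 ^ k)%:R :> R) by rewrite ler1n expn_gt0.
rewrite expnS natrM.
have -> : (2%:R : R) = 1 + 1 by rewrite -natr1.
nra.
Qed.

End Norms.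
Section Vec.
Variable R : realType.

Definition Ssq k (v : 'cV[R[i]]_k) : R := \sum_(i < k) cabs2 (v i ord0).

Lemma vnormE k (v : 'cV[R[i]]_k) : vnorm v = Num.sqrt (Ssq v).
Proof. by []. Qed.

Lemma Ssq_ge0 k (v : 'cV[R[i]]_k) : 0 <= Ssq v.
Proof. by apply: sumr_ge0 => i _; apply: cabs2_ge0. Qed.

Lemma Ssq_eq0 k (v : 'cV[R[i]]_k) : Ssq v = 0 -> v = 0.
Proof.
move/eqP; rewrite psumr_eq0; last by move=> i _; apply: cabs2_ge0.
move/allP => h; apply/matrixP => i j; rewrite ord1 mxE; apply: cabs2_eq0.
by apply/eqP; apply: h; rewrite mem_index_enum.
Qed.

Lemma Ssq_entry k (v : 'cV[R[i]]_k) j : cabs2 (v j ord0) <= Ssq v.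
Proof.
rewrite /Ssq (bigD1 j) //= lerDl; apply: sumr_ge0 => i _; apply: cabs2_ge0.
Qed.

Lemma Ssq_scale k (r : R) (v : 'cV[R[i]]_k) : Ssq (r%:C *: v) = r ^+ 2 * Ssq v.
Proof.
rewrite /Ssq mulr_sumr; apply: eq_bigr => i _; by rewrite mxE cabs2M cabs2_real.
Qed.

Lemma Ssq_D_le k (x y : 'cV[R[i]]_k) (d : R) : 0 < d ->
  Ssq (x + y) <= (1 + d) * Ssq x + (1 + d^-1) * Ssq y.
Proof.
move=> d0; rewrite /Ssq !mulr_sumr -big_split /=; apply: ler_sum => i _.
by rewrite mxE; apply: cabs2D_le.
Qed.

Lemma vnorm_ge0 k (v : 'cV[R[i]]_k) : 0 <= vnorm v.
Proof. exact: sqrtr_ge0. Qed.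

Lemma vnorm_sq k (v : 'cV[R[i]]_k) : vnorm v ^+ 2 = Ssq v.
Proof. by rewrite vnormE sqr_sqrtr // Ssq_ge0. Qed.

Lemma vnorm0 k : vnorm (0 : 'cV[R[i]]_k) = 0.
Proof. by rewrite /vnorm /Ssq big1 ?sqrtr0 // => i _; rewrite mxE /cabs2 /= expr0n /= addr0. Qed.

Lemma vnormD k (x y : 'cV[R[i]]_k) : vnorm (x + y) <= vnorm x + vnorm y.
Proof.
have [->|nx] := eqVneq x 0; first by rewrite vnorm0 !add0r.
have [->|ny] := eqVneq y 0; first by rewrite vnorm0 !addr0.
have px : 0 < vnorm x.
  rewrite lt_neqAle vnorm_ge0 andbT eq_sym; apply/eqP => h.
  by move: nx; rewrite (@Ssq_eq0 _ x) ?eqxx // -vnorm_sq h expr0n.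
have py : 0 < vnorm y.
  rewrite lt_neqAle vnorm_ge0 andbT eq_sym; apply/eqP => h.
  by move: ny; rewrite (@Ssq_eq0 _ y) ?eqxx // -vnorm_sq h expr0n.
rewrite -ler_sqr ?nnegrE ?addr_ge0 ?vnorm_ge0 //.
have := Ssq_D_le x y (divr_gt0 py px).
rewrite -!vnorm_sq => h; apply: (le_trans h); rewrite invf_div.
rewrite le_eqVlt; apply/orP; left; apply/eqP; field; rewrite ?gt_eqF //.
Qed.

Lemma Ssq_mul_bound k l (A : 'M[R[i]]_(k, l)) (v : 'cV[R[i]]_l) :
  Ssq (A *m v) <= (2 ^ l)%:R * (\sum_i \sum_j cabs2 (A i j)) * Ssq v.
Proof.
rewrite {1}/Ssq -mulrA mulr_suml mulr_sumr; apply: ler_sum => i _.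
rewrite mxE; apply: (le_trans (cabs2_sum_le _)); rewrite ler_wpM2l //.
rewrite mulr_suml; apply: ler_sum => j _; rewrite cabs2M ler_wpM2l ?cabs2_ge0 //.
exact: (Ssq_entry v j).
Qed.

Definition opset k l (A : 'M[R[i]]_(k, l)) :=
  [set vnorm (A *m v) | v in [set v : 'cV[R[i]]_l | vnorm v <= 1]].

Lemma opnormE k l (A : 'M[R[i]]_(k, l)) : opnorm A = sup (opset A).
Proof. by []. Qed.

Lemma Ssq_le1 l (v : 'cV[R[i]]_l) : vnorm v <= 1 -> Ssq v <= 1.
Proof.
move=> h; rewrite -vnorm_sq -(expr1n _ 2%N) ler_sqr ?nnegrE ?vnorm_ge0 //.
Qed.

Lemma opset_ub k l (A : 'M[R[i]]_(k, l)) : has_ubound (opset A).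
Proof.
exists (Num.sqrt ((2 ^ l)%:R * (\sum_i \sum_j cabs2 (A i j)))).
move=> _ [v /= hv <-]; rewrite vnormE; apply: ler_wsqrtr.
apply: (le_trans (Ssq_mul_bound A v)); rewrite ler_piMr ?Ssq_le1 //.
by rewrite mulr_ge0 // sumr_ge0 // => i _; rewrite sumr_ge0 // => j _; apply: cabs2_ge0.
Qed.

Lemma opset_n0 k l (A : 'M[R[i]]_(k, l)) : opset A !=set0.
Proof.
exists (vnorm (A *m 0)); exists 0 => //=.
by rewrite /vnorm /Ssq big1 ?sqrtr0 // => i _; rewrite mxE /cabs2 /= expr0n /= addr0.
Qed.

Lemma opnorm_ub k l (A : 'M[R[i]]_(k, l)) v : vnorm v <= 1 -> vnorm (A *m v) <= opnorm A.
Proof. by move=> hv; apply: (ub_le_sup (opset_ub A)); exists v. Qed.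

Lemma opnorm_ge0 k l (A : 'M[R[i]]_(k, l)) : 0 <= opnorm A.
Proof.
apply: (le_trans (vnorm_ge0 (A *m 0))); apply: opnorm_ub.
by rewrite /vnorm /Ssq big1 ?sqrtr0 // => i _; rewrite mxE /cabs2 /= expr0n /= addr0.
Qed.

Lemma opnorm_le k l (A : 'M[R[i]]_(k, l)) c :
  (forall v, vnorm v <= 1 -> vnorm (A *m v) <= c) -> opnorm A <= c.
Proof. by move=> h; apply: ge_sup; [apply: opset_n0 | move=> _ [v hv <-]; apply: h]. Qed.

Lemma opnorm_leS k l (A : 'M[R[i]]_(k, l)) c : 0 <= c ->
  (forall v, Ssq (A *m v) <= c ^+ 2 * Ssq v) -> opnorm A <= c.
Proof.
move=> c0 h; apply: opnorm_le => v hv.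
rewrite -(ler_sqr (vnorm_ge0 _)) ?nnegrE // vnorm_sq.
apply: (le_trans (h v)); rewrite ler_piMr ?sqr_ge0 ?Ssq_le1 //.
Qed.

Lemma Ssq_opnorm k l (A : 'M[R[i]]_(k, l)) v : Ssq (A *m v) <= opnorm A ^+ 2 * Ssq v.
Proof.
have [->|nv] := eqVneq v 0.
  by rewrite mulmx0 /Ssq !big1 ?mulr0 // => i _; rewrite mxE /cabs2 /= expr0n /= addr0.
have pv : 0 < vnorm v.
  rewrite lt_neqAle vnorm_ge0 andbT eq_sym; apply/eqP => h.
  by move: nv; rewrite (@Ssq_eq0 _ v) ?eqxx // -vnorm_sq h expr0n.
set t := vnorm v.
have h1 : vnorm (t^-1%:C *: v) <= 1.
  rewrite vnormE Ssq_scale -vnorm_sq -/t exprVn mulVf ?sqrtr1 //.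
  by rewrite sqrf_eq0 gt_eqF.
have := opnorm_ub A h1.
rewrite -scalemxAr vnormE Ssq_scale => h2.
have h3 : t^-1 ^+ 2 * Ssq (A *m v) <= opnorm A ^+ 2.
  rewrite -(sqr_sqrtr (_ : 0 <= t^-1 ^+ 2 * Ssq (A *m v))); last by rewrite mulr_ge0 ?sqr_ge0 ?Ssq_ge0.
  by rewrite ler_sqr ?nnegrE ?sqrtr_ge0 ?opnorm_ge0.
rewrite -[Ssq v]vnorm_sq -/t; move: h3; rewrite exprVn ler_pdivrMl ?exprn_gt0 //.
by rewrite mulrC.
Qed.

Lemma opnormD k l (A B : 'M[R[i]]_(k, l)) : opnorm (A + B) <= opnorm A + opnorm B.
Proof.
apply: opnorm_le => v hv; rewrite mulmxDl.
apply: (le_trans (vnormD _ _)); apply: lerD; exact: opnorm_ub.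
Qed.

Lemma opnorm_bound k l (A : 'M[R[i]]_(k, l)) :
  opnorm A <= Num.sqrt ((2 ^ l)%:R * (\sum_i \sum_j cabs2 (A i j))).
Proof.
apply: opnorm_leS; first exact: sqrtr_ge0.
move=> v; rewrite sqr_sqrtr ?Ssq_mul_bound //.
by rewrite mulr_ge0 // sumr_ge0 // => i _; rewrite sumr_ge0 // => j _; apply: cabs2_ge0.
Qed.

End Vec.
Section Idx.

Lemma idx_proof n m (s : 'I_n) (p : 'I_m) : (s * m + p < n * m)%N.
Proof.
have hs := ltn_ord s; have hp := ltn_ord p.
apply: (@leq_trans (s.+1 * m)); first by rewrite mulSn addnC ltn_add2r.
by rewrite leq_mul2r hs orbT.
Qed.

Definition idx n m (s : 'I_n) (p : 'I_m) : 'I_(n * m) := Ordinal (idx_proof s p).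

Lemma blk_idx n m (s : 'I_n) (p : 'I_m) : blk_of (idx s p) = s.
Proof.
apply: val_inj => /=; have hp := ltn_ord p.
by rewrite divnMDl ?(leq_ltn_trans _ hp) // divn_small // addn0.
Qed.

Lemma pos_idx n m (s : 'I_n) (p : 'I_m) : pos_of (idx s p) = p.
Proof.
apply: val_inj => /=; have hp := ltn_ord p.
by rewrite modnMDl modn_small.
Qed.

Lemma idx_blkpos n m (i : 'I_(n * m)) : idx (blk_of i) (pos_of i) = i.
Proof. by apply: val_inj => /=; rewrite -divn_eq. Qed.

Lemma idx_inj n m (i j : 'I_(n * m)) : blk_of i = blk_of j -> pos_of i = pos_of j -> i = j.
Proof. by move=> h1 h2; rewrite -(idx_blkpos i) -(idx_blkpos j) h1 h2. Qed.

Lemma sum_idx (V : nmodType) n m (F : 'I_(n * m) -> V) :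
  \sum_(k < n * m) F k = \sum_(s < n) \sum_(p < m) F (idx s p).
Proof.
rewrite (partition_big (@blk_of n m) predT) //=; apply: eq_bigr => s _.
rewrite (reindex_onto (@idx n m s) (@pos_of n m)) /=; last first.
  by move=> i /eqP <-; apply: idx_blkpos.
by apply: eq_bigl => p; rewrite blk_idx pos_idx !eqxx.
Qed.

End Idx.

Section Kron.
Variable R : realType.
Variables n m : nat.
Local Notation C := (R[i]).

Definition kr (P : 'M[C]_n) : 'M[C]_(n * m) :=
  \matrix_(i, j) (P (blk_of i) (blk_of j) * (pos_of i == pos_of j)%:R).

Definition bd (G : 'I_n -> 'M[C]_m) : 'M[C]_(n * m) :=
  \matrix_(i, j) (if blk_of i == blk_of j then G (blk_of i) (pos_of i) (pos_of j) else 0).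

Lemma kr_bd P G i k : (kr P *m bd G) i k = P (blk_of i) (blk_of k) * G (blk_of k) (pos_of i) (pos_of k).
Proof.
rewrite mxE (bigD1 (idx (blk_of k) (pos_of i))) //= big1 ?addr0.
  by rewrite !mxE blk_idx pos_idx !eqxx mulr1.
move=> j hj; rewrite !mxE.
case: (eqVneq (blk_of j) (blk_of k)) => hb; last by rewrite mulr0.
case: (eqVneq (pos_of i) (pos_of j)) => hp; last by rewrite mulr0 mul0r.
by move: hj; rewrite -hb hp idx_blkpos eqxx.
Qed.

Lemma kr_bd_kr P G Q i l : (kr P *m bd G *m kr Q) i l =
  \sum_s P (blk_of i) s * G s (pos_of i) (pos_of l) * Q s (blk_of l).
Proof.
rewrite mxE sum_idx; apply: eq_bigr => s _.
rewrite (bigD1 (pos_of l)) //= big1 ?addr0.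
  by rewrite kr_bd !mxE blk_idx pos_idx eqxx mulr1.
move=> p hp; rewrite kr_bd [kr Q _ _]mxE pos_idx.
by rewrite (negbTE hp) mulr0n !mulr0.
Qed.

Lemma kr_mul P Q : kr P *m kr Q = kr (P *m Q).
Proof.
apply/matrixP => i l; rewrite !mxE sum_idx mulr_suml; apply: eq_bigr => s _.
rewrite (bigD1 (pos_of i)) //= big1 ?addr0.
  rewrite !mxE blk_idx pos_idx eqxx mulr1.
  by case: (pos_of i == pos_of l); rewrite ?mulr1 ?mulr0.
move=> p hp; rewrite !mxE pos_idx eq_sym (negbTE hp).
by rewrite mulr0 mul0r.
Qed.

Lemma kr1 : kr 1%:M = 1%:M.
Proof.
apply/matrixP => i j; rewrite !mxE.
case: (eqVneq i j) => [->|hij]; first by rewrite !eqxx mulr1.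
case: (eqVneq (blk_of i) (blk_of j)) => hb; last by rewrite mul0r.
case: (eqVneq (pos_of i) (pos_of j)) => hp; last by rewrite mulr0.
by case/eqP: hij; apply: idx_inj.
Qed.

Lemma adjmx_kr P : adjmx (kr P) = kr (adjmx P).
Proof.
apply/matrixP => i j; rewrite !mxE rmorphM /=.
by rewrite conjc_nat eq_sym.
Qed.

End Kron.
Section Unit.
Variable R : realType.
Local Notation C := (R[i]).

Lemma adjmx_mul k l p (A : 'M[C]_(k, l)) (B : 'M[C]_(l, p)) :
  adjmx (A *m B) = adjmx B *m adjmx A.
Proof. by rewrite /adjmx trmx_mul map_mxM. Qed.

Lemma adjmxK k l (A : 'M[C]_(k, l)) : adjmx (adjmx A) = A.
Proof. by apply/matrixP => i j; rewrite !mxE conjcK. Qed.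

Lemma adjmxB k l (A B : 'M[C]_(k, l)) : adjmx (A - B) = adjmx A - adjmx B.
Proof. by apply/matrixP => i j; rewrite !mxE rmorphB. Qed.

Lemma Ssq_adj k (v : 'cV[C]_k) : Ssq v = complex.Re ((adjmx v *m v) ord0 ord0).
Proof.
rewrite mxE Re_sum; apply: eq_bigr => i _; rewrite !mxE.
by case: (v i ord0) => a b; rewrite /cabs2 /=; ring.
Qed.

Lemma Ssq_unitary k (U : 'M[C]_k) v : adjmx U *m U = 1%:M -> Ssq (U *m v) = Ssq v.
Proof.
by move=> hU; rewrite !Ssq_adj adjmx_mul mulmxA -(mulmxA (adjmx v)) hU mulmx1.
Qed.

Lemma opnorm_conj k (U A : 'M[C]_k) : unitary_mx U ->
  opnorm (U *m A *m adjmx U) <= opnorm A.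
Proof.
case=> h1 h2; apply: opnorm_leS; first exact: opnorm_ge0.
move=> v; rewrite -!mulmxA Ssq_unitary //.
rewrite -(Ssq_unitary v (U := adjmx U)); last by rewrite adjmxK.
exact: Ssq_opnorm.
Qed.

Lemma bd_col n m (G : 'I_n -> 'M[C]_m) (v : 'cV[C]_(n * m)) s p :
  (bd G *m v) (idx s p) ord0 = (G s *m \col_q v (idx s q) ord0) p ord0.
Proof.
rewrite [LHS]mxE sum_idx (bigD1 s) //=.
rewrite [X in _ + X = _]big1 ?addr0.
  by rewrite mxE; apply: eq_bigr => q _; rewrite !mxE !blk_idx !pos_idx eqxx.
move=> t ht; apply: big1 => q _; rewrite !mxE !blk_idx eq_sym (negbTE ht).
by rewrite mul0r.
Qed.

Lemma opnorm_bd n m (G : 'I_n -> 'M[C]_m) c : 0 <= c ->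
  (forall s, opnorm (G s) <= c) -> opnorm (bd G) <= c.
Proof.
move=> c0 hG; apply: opnorm_leS => // v.
rewrite /Ssq !sum_idx mulr_sumr; apply: ler_sum => s _.
under eq_bigr do rewrite bd_col.
have := Ssq_opnorm (G s) (\col_q v (idx s q) ord0).
rewrite /Ssq => h; apply: (le_trans h).
have -> : \sum_(i < m) cabs2 ((\col_q v (idx s q) ord0) i ord0) = \sum_(p < m) cabs2 (v (idx s p) ord0).
  by apply: eq_bigr => q _; rewrite mxE.
apply: ler_wpM2r; first by apply: sumr_ge0 => q _; apply: cabs2_ge0.
by rewrite ler_sqr ?nnegrE ?opnorm_ge0.
Qed.

End Unit.
Section Cont.
Variable R : realType.
Local Notation C := (R[i]).
Variable T : topologicalType.

Lemma cont_ext (f g : T -> R) : (forall t, f t = g t) -> continuous g -> continuous f.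
Proof. by move=> h; have -> : f = g by apply: funext. Qed.

Lemma contD (f g : T -> R) : continuous f -> continuous g -> continuous (fun t => f t + g t).
Proof. by move=> hf hg x; apply: cvgD; [apply: hf | apply: hg]. Qed.
Lemma contM (f g : T -> R) : continuous f -> continuous g -> continuous (fun t => f t * g t).
Proof. by move=> hf hg x; apply: cvgM; [apply: hf | apply: hg]. Qed.
Lemma contN (f : T -> R) : continuous f -> continuous (fun t => - f t).
Proof. by move=> hf x; apply: cvgN; apply: hf. Qed.
Lemma contB (f g : T -> R) : continuous f -> continuous g -> continuous (fun t => f t - g t).
Proof. by move=> hf hg; apply: contD => //; apply: contN. Qed.
Lemma contC (c : R) : continuous (fun _ : T => c).
Proof. exact: cst_continuous. Qed.
Lemma contV (f : T -> R) : continuous f -> (forall t, f t != 0) -> continuous (fun t => (f t)^-1).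
Proof. by move=> hf h0 x; apply: cvgV; [apply: h0 | apply: hf]. Qed.
Lemma contX (f : T -> R) k : continuous f -> continuous (fun t => f t ^+ k).
Proof.
move=> hf; elim: k => [|k IH]; first by apply: (@cont_ext _ (fun _ => 1)); [move=> t; rewrite expr0 | apply: contC].
by apply: (@cont_ext _ (fun t => f t * f t ^+ k)); [move=> t; rewrite exprS | apply: contM].
Qed.
Lemma contMax (f g : T -> R) : continuous f -> continuous g -> continuous (fun t => Num.max (f t) (g t)).
Proof. by move=> hf hg x; apply: (@continuous_max R T f g x); [apply: hf | apply: hg]. Qed.
Lemma contMin (f g : T -> R) : continuous f -> continuous g -> continuous (fun t => Num.min (f t) (g t)).
Proof. by move=> hf hg x; apply: (@continuous_min R T f g x); [apply: hf | apply: hg]. Qed.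
Lemma contSqrt (f : T -> R) : continuous f -> continuous (fun t => Num.sqrt (f t)).
Proof. by move=> hf x; apply: (continuous_comp (hf x)); apply: sqrt_continuous. Qed.
Lemma cont_sum I (r : seq I) (P : pred I) (F : I -> T -> R) :
  (forall i, continuous (F i)) -> continuous (fun t => \sum_(i <- r | P i) F i t).
Proof.
move=> hF; elim: r => [|a r IH].
  by apply: (@cont_ext _ (fun _ => 0)) => [t|]; [rewrite big_nil | apply: contC].
case Pa: (P a).
  by apply: (@cont_ext _ (fun t => F a t + \sum_(i <- r | P i) F i t)) => [t|];
    [rewrite big_cons Pa | apply: contD].
by apply: (@cont_ext _ (fun t => \sum_(i <- r | P i) F i t)) => // t; rewrite big_cons Pa.
Qed.

Definition cc (g : T -> C) := continuous (fun t => complex.Re (g t)) /\ continuous (fun t => complex.Im (g t)).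

Lemma ccD g1 g2 : cc g1 -> cc g2 -> cc (fun t => g1 t + g2 t).
Proof.
case=> h1 h2 [h3 h4]; split.
  by apply: (@cont_ext _ (fun t => complex.Re (g1 t) + complex.Re (g2 t))) => [t|]; [rewrite ReD | apply: contD].
by apply: (@cont_ext _ (fun t => complex.Im (g1 t) + complex.Im (g2 t))) => [t|]; [rewrite ImD | apply: contD].
Qed.
Lemma ccN g : cc g -> cc (fun t => - g t).
Proof.
case=> h1 h2; split.
  by apply: (@cont_ext _ (fun t => - complex.Re (g t))) => [t|]; [rewrite ReN | apply: contN].
by apply: (@cont_ext _ (fun t => - complex.Im (g t))) => [t|]; [rewrite ImN | apply: contN].
Qed.
Lemma ccB g1 g2 : cc g1 -> cc g2 -> cc (fun t => g1 t - g2 t).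
Proof. by move=> h1 h2; apply: ccD => //; apply: ccN. Qed.
Lemma ccM g1 g2 : cc g1 -> cc g2 -> cc (fun t => g1 t * g2 t).
Proof.
case=> h1 h2 [h3 h4]; split.
  apply: (@cont_ext _ (fun t => complex.Re (g1 t) * complex.Re (g2 t) - complex.Im (g1 t) * complex.Im (g2 t))) => [t|]; first by rewrite ReM.
  by apply: contB; apply: contM.
apply: (@cont_ext _ (fun t => complex.Re (g1 t) * complex.Im (g2 t) + complex.Im (g1 t) * complex.Re (g2 t))) => [t|]; first by rewrite ImM.
by apply: contD; apply: contM.
Qed.
Lemma ccC (c : C) : cc (fun _ => c).
Proof. by split; apply: contC. Qed.
Lemma cc_real (r : T -> R) : continuous r -> cc (fun t => (r t)%:C).
Proof. by move=> h; split => //; apply: contC. Qed.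
Lemma cc_conj g : cc g -> cc (fun t => (g t)^*).
Proof.
case=> h1 h2; split.
  by apply: (@cont_ext _ (fun t => complex.Re (g t))) => // t; case: (g t).
by apply: (@cont_ext _ (fun t => - complex.Im (g t))) => [t|]; [case: (g t) | apply: contN].
Qed.
Lemma cc_sum I (r : seq I) (P : pred I) (F : I -> T -> C) :
  (forall i, cc (F i)) -> cc (fun t => \sum_(i <- r | P i) F i t).
Proof.
move=> hF; split.
  apply: (@cont_ext _ (fun t => \sum_(i <- r | P i) complex.Re (F i t))) => [t|]; first by rewrite Re_sum.
  by apply: cont_sum => i; case: (hF i).
apply: (@cont_ext _ (fun t => \sum_(i <- r | P i) complex.Im (F i t))) => [t|]; first by rewrite Im_sum.
by apply: cont_sum => i; case: (hF i).
Qed.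
Lemma cc_cabs2 g : cc g -> continuous (fun t => cabs2 (g t)).
Proof. by case=> h1 h2; apply: contD; apply: contX. Qed.

Lemma mxc_E k l (F : T -> 'M[C]_(k, l)) : mx_continuous F <-> forall i j, cc (fun t => F t i j).
Proof. by []. Qed.

Lemma mxc_mul k l p (A : T -> 'M[C]_(k, l)) (B : T -> 'M[C]_(l, p)) :
  mx_continuous A -> mx_continuous B -> mx_continuous (fun t => A t *m B t).
Proof.
move=> hA hB i j; have : cc (fun t => \sum_(q < l) A t i q * B t q j).
  by apply: cc_sum => q; apply: ccM; [apply: hA | apply: hB].
by congr cc; apply: funext => t; rewrite mxE.
Qed.
Lemma mxc_sub k l (A B : T -> 'M[C]_(k, l)) :
  mx_continuous A -> mx_continuous B -> mx_continuous (fun t => A t - B t).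
Proof.
move=> hA hB i j; have : cc (fun t => A t i j - B t i j) by apply: ccB; [apply: hA | apply: hB].
by congr cc; apply: funext => t; rewrite !mxE.
Qed.
Lemma mxc_adj k l (A : T -> 'M[C]_(k, l)) : mx_continuous A -> mx_continuous (fun t => adjmx (A t)).
Proof.
move=> hA i j; have : cc (fun t => (A t j i)^*) by apply: cc_conj; apply: hA.
by congr cc; apply: funext => t; rewrite !mxE.
Qed.

End Cont.

Section Dist.
Variable R : realType.
Variable X : metricType R.

Lemma cont_mdist (x0 : X) : continuous (fun x : X => mdist x0 x).
Proof.
move=> x; apply/cvgrPdist_lt => e e0.
have : nbhs x (ball x e) by apply: nbhsx_ballx.
apply: filterS => t; rewrite ballEmdist /= => hxt.
rewrite ltr_distl; apply/andP; split.
  have := metric_triangle x0 x t; lra.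
have := metric_triangle x0 t x; rewrite (metric_sym t x); lra.
Qed.

End Dist.
Section Orth.
Variable R : realType.
Variable n : nat.
Variable s0 : 'I_n.
Variable v : 'I_n -> R.
Hypothesis v_ge0 : forall s, 0 <= v s.
Hypothesis v_norm : \sum_s v s ^+ 2 = 1.

Lemma sum_deltal (F : 'I_n -> R) t : \sum_k (t == k)%:R * F k = F t.
Proof.
rewrite (bigD1 t) //= eqxx mul1r big1 ?addr0 // => k hk.
by rewrite eq_sym (negbTE hk) mul0r.
Qed.
Lemma sum_deltar (F : 'I_n -> R) t : \sum_k F k * (k == t)%:R = F t.
Proof.
rewrite (bigD1 t) //= eqxx mulr1 big1 ?addr0 // => k hk.
by rewrite (negbTE hk) mulr0.
Qed.

Let c := v s0.
Let w s := (s == s0)%:R + v s.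
Definition Orth s t := w s * w t / (1 + c) - (s == t)%:R.

Lemma c_ge0 : 0 <= c. Proof. exact: v_ge0. Qed.

Lemma sum_w2 : \sum_k w k ^+ 2 = 2 + 2 * c.
Proof.
have e : forall k, w k ^+ 2 = (s0 == k)%:R * 1 + 2 * ((s0 == k)%:R * v k) + v k ^+ 2.
  move=> k; rewrite /w [s0 == k]eq_sym; case: (k == s0) => /=; ring.
rewrite (eq_bigr _ (fun k _ => e k)) !big_split /= -mulr_sumr !sum_deltal v_norm /c.
ring.
Qed.

Lemma Orth_sym s t : Orth s t = Orth t s.
Proof. rewrite /Orth eq_sym; congr (_ - _); rewrite [w t * _]mulrC //. Qed.

Lemma Orth_row0 t : Orth s0 t = v t.
Proof.
have hc : 1 + c != 0 by rewrite gt_eqF // ltr_pwDl // c_ge0.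
rewrite /Orth /w eqxx /c [(1 + v s0) * _]mulrC -mulrA divff // mulr1 eq_sym.
by case: (t == s0); rewrite /=; ring.
Qed.

Lemma Orth_orth s t : \sum_k Orth s k * Orth k t = (s == t)%:R.
Proof.
have hc : 1 + c != 0 by rewrite gt_eqF // ltr_pwDl // c_ge0.
have e : forall k, Orth s k * Orth k t =
   (w s * w t / (1 + c) ^+ 2) * w k ^+ 2 - (w s * w k / (1 + c)) * (k == t)%:R
   - (s == k)%:R * (w k * w t / (1 + c)) + (s == k)%:R * (k == t)%:R.
  by move=> k; rewrite /Orth; field.
rewrite (eq_bigr _ (fun k _ => e k)) !big_split /= !sumrN -mulr_sumr sum_w2.
rewrite sum_deltar sum_deltal sum_deltal.
by field.
Qed.

End Orth.
Section Extra.
Variable R : realType.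
Local Notation C := (R[i]).

Lemma cabs2N (z : C) : cabs2 (- z) = cabs2 z.
Proof. by rewrite /cabs2 ReN ImN !sqrrN. Qed.

Lemma opnormN k l (A : 'M[C]_(k, l)) : opnorm (- A) = opnorm A.
Proof.
have h : forall B : 'M[C]_(k, l), opnorm (- B) <= opnorm B.
  move=> B; apply: opnorm_leS; first exact: opnorm_ge0.
  move=> v; rewrite mulNmx.
  have -> : Ssq (- (B *m v)) = Ssq (B *m v) by apply: eq_bigr => i _; rewrite mxE cabs2N.
  exact: Ssq_opnorm.
by apply/eqP; rewrite eq_le h /=; rewrite -{1}(opprK A) h.
Qed.

Lemma opnormZ k l (r : R) (A : 'M[C]_(k, l)) : 0 <= r -> opnorm (r%:C *: A) <= r * opnorm A.
Proof.
move=> r0; apply: opnorm_leS; first by rewrite mulr_ge0 ?opnorm_ge0.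
move=> v; rewrite -scalemxAl Ssq_scale exprMn.
have := Ssq_opnorm A v; have := sqr_ge0 r; nra.
Qed.

Lemma opnorm_dist k l (A B : 'M[C]_(k, l)) : `|opnorm A - opnorm B| <= opnorm (A - B).
Proof.
have h1 := opnormD B (A - B); rewrite addrC subrK in h1.
have h2 := opnormD A (B - A); rewrite addrC subrK -opprB opnormN in h2.
rewrite ler_norml; apply/andP; split; last by rewrite lerBlDl.
by rewrite lerNl opprB lerBlDl.
Qed.

End Extra.
Section MoreCont.
Variable R : realType.
Local Notation C := (R[i]).

Lemma mxc_cst (T : topologicalType) k l (A : 'M[C]_(k, l)) : mx_continuous (fun _ : T => A).
Proof. by move=> i j; apply: ccC. Qed.

Lemma mxc_comp (T U : topologicalType) k l (F : U -> 'M[C]_(k, l)) (g : T -> U) :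
  mx_continuous F -> continuous g -> mx_continuous (fun t => F (g t)).
Proof.
move=> hF hg i j; case: (hF i j) => h1 h2; split => t.
  exact: (@continuous_comp _ _ _ g (fun u => complex.Re (F u i j)) t (hg t) (h1 (g t))).
exact: (@continuous_comp _ _ _ g (fun u => complex.Im (F u i j)) t (hg t) (h2 (g t))).
Qed.

Lemma mxc_bd (T : topologicalType) n m (G : 'I_n -> T -> 'M[C]_m) :
  (forall s, mx_continuous (G s)) -> mx_continuous (fun t => bd (fun s => G s t)).
Proof.
move=> hG i j; case: (eqVneq (blk_of i) (blk_of j)) => e.
  have := hG (blk_of i) (pos_of i) (pos_of j); congr cc; apply: funext => t.
  by rewrite mxE e eqxx.
have := @ccC R T 0; congr cc; apply: funext => t.
by rewrite mxE (negbTE e).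
Qed.

Lemma mxc_scale (T : topologicalType) k l (r : T -> R) (A : T -> 'M[C]_(k, l)) :
  continuous r -> mx_continuous A -> mx_continuous (fun t => (r t)%:C *: A t).
Proof.
move=> hr hA i j; have := ccM (cc_real hr) (hA i j); congr cc; apply: funext => t.
by rewrite mxE.
Qed.

End MoreCont.
Section Main.
Variable R : realType.
Local Notation C := (R[i]).
Variables X Y : metricType R.
Variables n m : nat.
Hypothesis hn : (0 < n)%N.
Variable lam : 'I_n -> Y -> X.
Hypothesis hlam : forall s, continuous (lam s).
Variable eps : R.
Hypothesis heps : 0 < eps.
Variable f : X -> 'M[C]_m.
Hypothesis hf : mx_continuous f.
Variable eta : R.
Hypothesis heta : 0 < eta.
Hypothesis hfeta : forall x y : X, mdist x y < 2 * eta -> opnorm (f x - f y) < eps.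
Variable x0 : X.
Hypothesis hcov : [set: Y] = \bigcup_(s in [set: 'I_n]) (lam s @^-1` [set x | mdist x0 x < eta]).

Hypothesis hX : compact [set: X].

Let s0 : 'I_n := Ordinal hn.

Let gX (x : X) : R := Num.max 0 (eta - mdist x0 x).
Let WX (x : X) : R := Num.min 1 (Num.max 0 ((3 * eta - 2 * mdist x0 x) / eta)).

Let gX_ge0 x : 0 <= gX x. Proof. by rewrite /gX le_max lexx. Qed.
Let gX_gt0 x : mdist x0 x < eta -> 0 < gX x.
Proof. by move=> h; rewrite /gX lt_max subr_gt0 h orbT. Qed.
Let gX_pos x : 0 < gX x -> mdist x0 x < eta.
Proof. by rewrite /gX lt_max ltxx /= subr_gt0. Qed.

Let WX_ge0 x : 0 <= WX x. Proof. by rewrite /WX le_min ler01 le_max lexx. Qed.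
Let WX_le1 x : WX x <= 1. Proof. by rewrite /WX ge_min lexx. Qed.
Let WX_one x : mdist x0 x < eta -> WX x = 1.
Proof.
move=> h; have h1 : 1 <= (3 * eta - 2 * mdist x0 x) / eta.
  by rewrite ler_pdivlMr // mul1r; have := mdist_ge0 x0 x; have he : (0:R) < eta by []; lra.
rewrite /WX; have -> : Num.max 0 ((3 * eta - 2 * mdist x0 x) / eta) = (3 * eta - 2 * mdist x0 x) / eta.
  by apply/max_idPr; apply: le_trans h1.
by apply/min_idPl.
Qed.
Let WX_pos x : WX x != 0 -> mdist x0 x < 2 * eta.
Proof.
move=> h; rewrite ltNge; apply/negP => hd; move: h; apply/negP; rewrite negbK.
have h2 : (3 * eta - 2 * mdist x0 x) / eta <= 0 by rewrite ler_pdivrMr // mul0r; have he : (0:R) < eta by []; lra.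
rewrite /WX; have -> : Num.max 0 ((3 * eta - 2 * mdist x0 x) / eta) = 0 by apply/max_idPl.
by have -> : Num.min 1 0 = 0 :> R by apply/min_idPr; rewrite ler01.
Qed.

Let cont_gX : continuous gX.
Proof. by apply: contMax; [apply: contC | apply: contB; [apply: contC | apply: cont_mdist]]. Qed.
Let cont_WX : continuous WX.
Proof.
apply: contMin; first exact: contC.
apply: contMax; first exact: contC.
apply: contM; last exact: contC.
by apply: contB; [apply: contC | apply: contM; [apply: contC | apply: cont_mdist]].
Qed.


Let gsum (y : Y) : R := \sum_s gX (lam s y).

Let cont_gl s : continuous (fun y => gX (lam s y)).
Proof. move=> y; apply: cvg_comp; [apply: hlam | apply: cont_gX]. Qed.

Let gsum_gt0 y : 0 < gsum y.
Proof.
have : [set: Y] y by [].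
rewrite hcov => -[s _ /= hs].
rewrite /gsum (bigD1 s) //=; apply: (lt_le_trans (gX_gt0 hs)).
by rewrite lerDl sumr_ge0.
Qed.

Let cont_gsum : continuous gsum.
Proof. by apply: cont_sum. Qed.

Let hh (s : 'I_n) (y : Y) : R := gX (lam s y) / gsum y.
Let hh_ge0 s y : 0 <= hh s y.
Proof. by rewrite /hh divr_ge0 // ltW. Qed.
Let sum_hh y : \sum_s hh s y = 1.
Proof. rewrite /hh -mulr_suml; exact: (divff (lt0r_neq0 (gsum_gt0 y))). Qed.
Let cont_hh s : continuous (hh s).
Proof.
apply: contM; first exact: cont_gl.
by apply: contV => // y; rewrite gt_eqF.
Qed.

Let vv (y : Y) (s : 'I_n) : R := Num.sqrt (hh s y).
Let vv_ge0 y s : 0 <= vv y s. Proof. exact: sqrtr_ge0. Qed.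
Let vv_norm y : \sum_s vv y s ^+ 2 = 1.
Proof. by rewrite -(sum_hh y); apply: eq_bigr => s _; rewrite sqr_sqrtr. Qed.
Let cont_vv s : continuous (fun y => vv y s).
Proof. by apply: contSqrt. Qed.
Let vv_pos y s : vv y s != 0 -> mdist x0 (lam s y) < eta.
Proof.
rewrite /vv sqrtr_eq0 -ltNge /hh => h; apply: gX_pos.
by move: h; rewrite pmulr_lgt0 // invr_gt0.
Qed.

Let OO (y : Y) : 'I_n -> 'I_n -> R := Orth s0 (vv y).
Let cont_OO s t : continuous (fun y => OO y s t).
Proof.
rewrite /OO /Orth; apply: contB; last exact: contC.
apply: contM.
  by apply: contM; apply: contD; (apply: contC || apply: cont_vv).
apply: contV; first by apply: contD; [apply: contC | apply: cont_vv].
by move=> y; rewrite gt_eqF // ltr_pwDl.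
Qed.

Let Ocm (y : Y) : 'M[C]_n := \matrix_(s, t) (OO y s t)%:C.
Let Ocm_adj y : adjmx (Ocm y) = Ocm y.
Proof. by apply/matrixP => s t; rewrite !mxE conjc_real /OO Orth_sym. Qed.
Let Ocm_mul y : Ocm y *m Ocm y = 1%:M.
Proof.
apply/matrixP => s t; rewrite !mxE.
under eq_bigr do rewrite !mxE -rmorphM.
rewrite -raddf_sum /OO Orth_orth //. exact: rmorph_nat.
Qed.

Let u (y : Y) : 'M[C]_(n * m) := kr m (Ocm y).
Let u_adj y : adjmx (u y) = u y.
Proof. by rewrite /u adjmx_kr Ocm_adj. Qed.
Let u_unitary y : unitary_mx (u y).
Proof. by rewrite /unitary_mx u_adj /u kr_mul Ocm_mul kr1. Qed.
Let u_cont : mx_continuous u.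
Proof.
move=> i j; have := ccM (cc_real (@cont_OO (blk_of i) (blk_of j))) (@ccC R Y (pos_of i == pos_of j)%:R).
by congr cc; apply: funext => y; rewrite !mxE.
Qed.


Let gfun (x : X) : 'M[C]_m := (WX x)%:C *: (f x - f x0).
Let gfun_cont : mx_continuous gfun.
Proof. by apply: mxc_scale => //; apply: mxc_sub => //; apply: mxc_cst. Qed.

Let Gm (y : Y) : 'M[C]_(n * m) := bd (fun s => gfun (lam s y)).
Let phi2 (y : Y) : 'M[C]_(n * m) := bd (fun s => f (lam s y) - gfun (lam s y)).
Let M (y : Y) := u y *m phi2 y *m adjmx (u y).

Let phi_eq y : diag_hom lam f y = bd (fun s => f (lam s y)). Proof. by []. Qed.

Lemma realcM (a b : R) : (a * b)%:C = a%:C * b%:C :> C.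
Proof. exact: rmorphM. Qed.
Lemma realc_nat k : (k%:R : R)%:C = k%:R :> C.
Proof. exact: rmorph_nat. Qed.

Lemma realc_sum k (F : 'I_k -> R) : (\sum_s F s)%:C = \sum_s (F s)%:C :> C.
Proof. exact: raddf_sum. Qed.

Lemma bdB n' m' (G1 G2 : 'I_n' -> 'M[C]_m') : bd G1 - bd G2 = bd (fun s => G1 s - G2 s).
Proof.
apply/matrixP => i j; rewrite !mxE; case: ifP => _ //.
by rewrite subr0.
Qed.

Let M_eq y : u y *m diag_hom lam f y *m adjmx (u y) - M y = u y *m Gm y *m adjmx (u y).
Proof.
rewrite /M /phi2 phi_eq -bdB -/(Gm y) mulmxBr mulmxBl opprB addrC.
by rewrite -addrA [- _ + _]addrC addrN addr0.
Qed.

Let M_entry y i l : M y i l =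
  \sum_s (OO y (blk_of i) s)%:C * (f (lam s y) - gfun (lam s y)) (pos_of i) (pos_of l) * (OO y s (blk_of l))%:C.
Proof.
rewrite /M u_adj /u kr_bd_kr; apply: eq_bigr => s _; by rewrite !mxE.
Qed.

Let vv_f0 y s p q : (vv y s)%:C * (f (lam s y) - gfun (lam s y)) p q = (vv y s)%:C * f x0 p q.
Proof.
have [->|h] := eqVneq (vv y s) 0; first by rewrite !mul0r.
rewrite /gfun WX_one; last exact: vv_pos.
by rewrite !mxE rmorph1 mul1r opprB addrC subrK.
Qed.

Let M_blk0_l y i l : blk_of i = s0 -> M y i l = f x0 (pos_of i) (pos_of l) * (blk_of l == s0)%:R.
Proof.
move=> hi; rewrite M_entry hi.
under eq_bigr do rewrite /OO Orth_row0 // vv_f0.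
have -> : \sum_s (vv y s)%:C * f x0 (pos_of i) (pos_of l) * (Orth s0 (vv y) s (blk_of l))%:C
   = f x0 (pos_of i) (pos_of l) * (\sum_s Orth s0 (vv y) s0 s * Orth s0 (vv y) s (blk_of l))%:C.
  rewrite realc_sum mulr_sumr; apply: eq_bigr => s _.
  by rewrite Orth_row0 // realcM mulrCA mulrA.
by rewrite Orth_orth // realc_nat eq_sym.
Qed.

Let M_blk0_r y i l : blk_of l = s0 -> M y i l = f x0 (pos_of i) (pos_of l) * (blk_of i == s0)%:R.
Proof.
move=> hl; rewrite M_entry hl.
under eq_bigr do rewrite /OO [Orth s0 (vv y) _ s0]Orth_sym Orth_row0 // -mulrA [_ * (vv y _)%:C]mulrC vv_f0.
have -> : \sum_s (Orth s0 (vv y) (blk_of i) s)%:C * ((vv y s)%:C * f x0 (pos_of i) (pos_of l))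
   = f x0 (pos_of i) (pos_of l) * (\sum_s Orth s0 (vv y) (blk_of i) s * Orth s0 (vv y) s s0)%:C.
  rewrite realc_sum mulr_sumr; apply: eq_bigr => s _.
  rewrite [Orth s0 (vv y) s s0]Orth_sym Orth_row0 // realcM.
  ring.
by rewrite Orth_orth // realc_nat.
Qed.


Let e2p := diag2_proof m hn.
Let N y : 'M[C]_(m + (n * m - m)) := castmx (esym e2p, esym e2p) (M y).
Let b y : 'M[C]_(n * m - m) := drsubmx (N y).

Let blk_s0 (k : 'I_(n * m)) : (blk_of k == s0) = (k < m)%N.
Proof.
have nm0 : (0 < n * m)%N := leq_ltn_trans (leq0n k) (ltn_ord k).
have m0 : (0 < m)%N by move: nm0; rewrite muln_gt0 => /andP[].
apply/eqP/idP => [/(congr1 val) /= h|h].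
  by rewrite (divn_eq k m) h mul0n add0n ltn_mod.
by apply: val_inj => /=; rewrite divn_small.
Qed.

Let pos_small (k : 'I_(n * m)) : (k < m)%N -> val (pos_of k) = k.
Proof. by move=> h /=; rewrite modn_small. Qed.

Let ul y : ulsubmx (N y) = f x0.
Proof.
apply/matrixP => i j; rewrite !mxE castmxE M_blk0_l.
- have -> : blk_of (cast_ord (esym (esym e2p)) (lshift (n * m - m) j)) == s0 by rewrite blk_s0 /=.
  rewrite mulr1; congr (f x0 _ _); apply: val_inj; rewrite pos_small //=.
by apply/eqP; rewrite blk_s0 /=.
Qed.

Let ur y : ursubmx (N y) = 0.
Proof.
apply/matrixP => i j; rewrite !mxE castmxE M_blk0_l.
- have -> : blk_of (cast_ord (esym (esym e2p)) (rshift m j)) == s0 = false.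
    by rewrite blk_s0 /= ltnNge leq_addr.
  by rewrite mulr0.
by apply/eqP; rewrite blk_s0 /=.
Qed.

Let dl y : dlsubmx (N y) = 0.
Proof.
apply/matrixP => i j; rewrite !mxE castmxE M_blk0_r.
- have -> : blk_of (cast_ord (esym (esym e2p)) (rshift m i)) == s0 = false.
    by rewrite blk_s0 /= ltnNge leq_addr.
  by rewrite mulr0.
by apply/eqP; rewrite blk_s0 /=.
Qed.

Let M_diag2 y : M y = diag2 hn (f x0) (b y).
Proof.
have h : block_mx (f x0) 0 0 (b y) = N y by rewrite -(ul y) -(ur y) -(dl y) submxK.
by rewrite /diag2 h /N castmxKV.
Qed.

Let phi2_cont : mx_continuous phi2.
Proof.
apply: (mxc_bd (G := fun s y => f (lam s y) - gfun (lam s y))) => s.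
by apply: mxc_sub; apply: mxc_comp.
Qed.

Let M_cont : mx_continuous M.
Proof. by apply: mxc_mul; [apply: mxc_mul | apply: mxc_adj]. Qed.

Let b_cont : mx_continuous b.
Proof.
move=> i j; have := M_cont (cast_ord (esym (esym e2p)) (rshift m i)) (cast_ord (esym (esym e2p)) (rshift m j)).
by congr cc; apply: funext => y; rewrite [RHS]mxE [RHS]mxE castmxE.
Qed.


Let Fo (x : X) : R := opnorm (f x - f x0).

Let cont_Fo : continuous Fo.
Proof.
move=> x; apply/cvgrPdist_lt => e e0.
pose D t := \sum_i \sum_j cabs2 ((f t - f x) i j).
have hD : continuous D.
  apply: cont_sum => i; apply: cont_sum => j; apply: cc_cabs2.
  by case: (mxc_sub hf (@mxc_cst R X m m (f x)) i j).
have D0 : D x = 0.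
  rewrite /D big1 // => i _; rewrite big1 // => j _.
  by rewrite subrr mxE /cabs2 /= expr0n /= addr0.
have e2 : 0 < e ^+ 2 / (2 ^ m)%:R by rewrite divr_gt0 ?exprn_gt0 // ltr0n expn_gt0.
move: (hD x) => /cvgrPdist_lt /(_ _ e2).
apply: filterS => t; rewrite D0 sub0r normrN => hDt.
have Dt0 : 0 <= D t.
  by apply: sumr_ge0 => i _; apply: sumr_ge0 => j _; apply: cabs2_ge0.
rewrite ger0_norm // in hDt.
apply: (le_lt_trans (opnorm_dist _ _)).
have -> : (f x - f x0) - (f t - f x0) = - (f t - f x).
  by rewrite opprB addrA subrK opprB.
rewrite opnormN; apply: (le_lt_trans (opnorm_bound _)).
rewrite -[e]ger0_norm ?ltW // -sqrtr_sqr ltr_sqrt ?exprn_gt0 //.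
by rewrite -ltr_pdivlMl // ?ltr0n ?expn_gt0 // mulrC.
Qed.

Let Hf (x : X) : R := WX x * Fo x.
Let cont_Hf : continuous Hf.
Proof. exact: contM. Qed.
Let Hf_ge0 x : 0 <= Hf x.
Proof. by rewrite /Hf mulr_ge0 // opnorm_ge0. Qed.
Let Hf_lt x : Hf x < eps.
Proof.
have [h0|h] := eqVneq (WX x) 0; first by rewrite /Hf h0 mul0r.
have hF : Fo x < eps by apply: hfeta; rewrite metric_sym; apply: WX_pos.
apply: le_lt_trans hF; rewrite /Hf.
have := @ler_wpM2r _ (Fo x) (opnorm_ge0 _) _ _ (WX_le1 x).
by rewrite mul1r.
Qed.

Lemma main_result : exists (u : Y -> 'M[C]_(n * m)) (b : Y -> 'M[C]_(n * m - m)),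
    [/\ mx_continuous u, (forall y, unitary_mx (u y)), mx_continuous b &
        supnorm (fun y => u y *m diag_hom lam f y *m adjmx (u y)
                          - diag2 hn (f x0) (b y)) < eps].
Proof.
exists u, b; split => //.
have [xc _ hxc] : exists2 c, c \in [set: X] & forall t, t \in [set: X] -> Hf t <= Hf c.
  apply: compact_EVT_max => //; first by exists x0.
  exact: continuous_subspaceT.
have c0 : 0 <= Hf xc by apply: le_trans (Hf_ge0 x0) (hxc _ (in_setT _)).
have hy y : opnorm (u y *m diag_hom lam f y *m adjmx (u y) - diag2 hn (f x0) (b y)) <= Hf xc.
  rewrite -M_diag2 M_eq; apply: le_trans (opnorm_conj _ (u_unitary y)) _.
  apply: opnorm_bd => // s.
  apply: le_trans (opnormZ _ (WX_ge0 _)) _.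
  exact: (hxc _ (in_setT _)).
rewrite /supnorm.
case: (pselect (exists y : Y, True)) => [[y _]|hne].
  apply: le_lt_trans (Hf_lt xc); apply: ge_sup.
    by exists (opnorm (u y *m diag_hom lam f y *m adjmx (u y) - diag2 hn (f x0) (b y))); exists y.
  by move=> _ [y' _ <-]; apply: hy.
have -> : [set opnorm (u y *m diag_hom lam f y *m adjmx (u y) - diag2 hn (f x0) (b y)) | y in [set: Y]] = set0.
  by apply/seteqP; split => // z [y _ _]; case: hne; exists y.
by rewrite sup0.
Qed.

End Main.


Local Close Scope complex_scope.
Unset Implicit Arguments.

Theorem corollary3p3 (R : realType) (X Y : metricType R) (n m : nat)
  (hn : (0 < n)%N)
  (hX : compact [set: X]) (hY : compact [set: Y])
  (lam : 'I_n -> Y -> X) (hlam : forall s, continuous (lam s))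
  (eps : R) (heps : 0 < eps)
  (f : X -> 'M[R[i]]_m) (hf : mx_continuous f)
  (eta : R) (heta : 0 < eta)
  (hfeta : forall x y : X, mdist x y < 2 * eta -> opnorm (f x - f y) < eps)
  (x0 : X)
  (hcov : [set: Y] = \bigcup_(s in [set: 'I_n]) (lam s @^-1` [set x | mdist x0 x < eta])) :
  exists (u : Y -> 'M[R[i]]_(n * m)) (b : Y -> 'M[R[i]]_(n * m - m)),
    [/\ mx_continuous u, (forall y, unitary_mx (u y)), mx_continuous b &
        supnorm (fun y => u y *m diag_hom lam f y *m adjmx (u y)
                          - diag2 hn (f x0) (b y)) < eps].
Proof.
exact: (@main_result R X Y n m hn lam hlam eps heps f hf eta heta hfeta x0 hcov hX).
Qed.
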